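(* For every finite configuration $F\subseteq\mathbb{R}^d$ there is a real $\varepsilon>0$ such that for all functions $\rho,\sigma\colon F\to F$ the following holds: if there is a real $q$ with $$\Big|\,q\|f'-f''\|^2-\big(\rho(f')-\rho(f'')\big)\cdot\big(\sigma(f')-\sigma(f'')\big)\Big|\leq\varepsilon\quad\text{for all } f',f''\in F,$$ then there is a real $\overline{q}$ with $$\overline{q}\|f'-f''\|^2=\big(\rho(f')-\rho(f'')\big)\cdot\big(\sigma(f')-\sigma(f'')\big)\quad\text{for all } f',f''\in F.$$
   Context: $\|\cdot\|$ is the Euclidean norm on $\mathbb{R}^d$ and $x\cdot y$ is the standard scalar product. *)

(* Defs.v *)
From mathcomp Require Import all_boot all_order all_algebra.
From mathcomp Require Import finmap.
From mathcomp Require Import reals.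
Set Implicit Arguments. Unset Strict Implicit. Unset Printing Implicit Defensive.
Import Order.TTheory GRing.Theory Num.Theory.
Local Open Scope ring_scope.

Definition dotv (R : realType) (d : nat) (x y : 'rV[R]_d) : R :=
  \sum_(i < d) x 0 i * y 0 i.

Definition enorm (R : realType) (d : nat) (x : 'rV[R]_d) : R :=
  Num.sqrt (dotv x x).

(* Main.v *)
Require Import Defs.
From mathcomp Require Import all_boot all_order all_algebra.
From mathcomp Require Import finmap.
From mathcomp Require Import reals.
From mathcomp Require Import lra.
Import Order.TTheory GRing.Theory Num.Theory.
Local Open Scope ring_scope.
Local Open Scope fset_scope.

Set Implicit Arguments.
Section Aux.
Variables (R : realType) (d : nat) (F : {fset 'rV[R]_d}).

Definition NN (f1 f2 : F) : R := enorm (val f1 - val f2) ^+ 2.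
Definition DD (x1 x2 y1 y2 : F) : R := dotv (val x1 - val x2) (val y1 - val y2).
Definition idx := (F * F * F * F * F * F)%type.
Definition rr (a : idx) : R :=
  let: (f1, f2, x1, x2, y1, y2) := a in DD x1 x2 y1 y2 / NN f1 f2.
Definition na (a : idx) : R := let: (f1, f2, _, _, _, _) := a in NN f1 f2.
Definition cc (t : idx * idx) : R :=
  `|rr t.1 - rr t.2| / ((na t.1)^-1 + (na t.2)^-1).
Definition good (t : idx * idx) : bool :=
  [&& 0 < na t.1, 0 < na t.2 & 0 < cc t].
Definition epsv : R := \big[Order.min/1]_(t | good t) (cc t / 2).

Lemma epsv_gt0 : 0 < epsv.
Proof.
rewrite /epsv; elim/big_ind: _ => //.
  by move=> x y hx hy; rewrite lt_min hx hy.
by move=> t /and3P[_ _ h]; rewrite divr_gt0.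
Qed.

Lemma dotv_ge0 (x : 'rV[R]_d) : 0 <= dotv x x.
Proof. by apply: sumr_ge0 => i _; rewrite -expr2 sqr_ge0. Qed.

Lemma dotv_eq0 (x : 'rV[R]_d) : dotv x x = 0 -> x = 0.
Proof.
move=> h; apply/rowP => i; rewrite mxE.
have := psumr_eq0P (P := xpredT) (F := fun i => x 0 i * x 0 i).
move/(_ (fun i _ => ltac:(rewrite -expr2 sqr_ge0; exact))) => H.
by have := H h i isT; move/eqP; rewrite mulf_eq0 orbb => /eqP.
Qed.

Lemma NN_ge0 f1 f2 : 0 <= NN f1 f2.
Proof. by rewrite /NN exprn_ge0 // sqrtr_ge0. Qed.

Lemma NN0 f1 f2 : NN f1 f2 = 0 -> f1 = f2.
Proof.
rewrite /NN /enorm sqr_sqrtr ?dotv_ge0 // => /dotv_eq0 /eqP.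
by rewrite subr_eq0 => /eqP /val_inj.
Qed.

End Aux.
Unset Implicit Arguments.

Theorem lemma2p1 (R : realType) (d : nat) (F : {fset 'rV[R]_d}) :
  exists eps : R, 0 < eps /\
    forall rho sigma : F -> F,
      (exists q : R, forall f1 f2 : F,
          `| q * enorm (val f1 - val f2) ^+ 2
             - dotv (val (rho f1) - val (rho f2)) (val (sigma f1) - val (sigma f2)) |
          <= eps) ->
      exists qbar : R, forall f1 f2 : F,
        qbar * enorm (val f1 - val f2) ^+ 2
        = dotv (val (rho f1) - val (rho f2)) (val (sigma f1) - val (sigma f2)).
Proof.
exists (epsv F); split; first exact: epsv_gt0.
move=> rho sigma [q Hq].
pose A (f1 f2 : F) : idx F := (f1, f2, rho f1, rho f2, sigma f1, sigma f2).
have Hr : forall f1 f2, 0 < NN f1 f2 -> `|q - rr (A f1 f2)| <= epsv F / NN f1 f2.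
  move=> f1 f2 hn; rewrite ler_pdivlMr //.
  have -> : `|q - rr (A f1 f2)| * NN f1 f2 = `|(q - rr (A f1 f2)) * NN f1 f2|.
    by rewrite normrM (ger0_norm (ltW hn)).
  rewrite mulrBl /rr /= mulfVK ?gt_eqF //.
  exact: Hq.
have Heq : forall a b c e, 0 < NN a b -> 0 < NN c e -> rr (A a b) = rr (A c e).
  move=> a b c e ha hb; apply/eqP; apply/negPn/negP => hne.
  set t := (A a b, A c e).
  have hs : 0 < ((na t.1)^-1 + (na t.2)^-1)%R by rewrite /= addr_gt0 ?invr_gt0.
  have hc : 0 < cc t by rewrite /cc divr_gt0 // normr_gt0 subr_eq0.
  have hg : good t by rewrite /good /= ha hb hc.
  have h1 : epsv F <= cc t / 2 by rewrite /epsv (bigmin_le_cond _ _ hg).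
  have h2 : cc t <= epsv F.
    rewrite /cc ler_pdivrMr // mulrDr.
    apply: le_trans (ler_distD q _ _) _; rewrite distrC.
    by apply: lerD; [exact: Hr | exact: Hr].
  have : cc t <= cc t / 2 by apply: le_trans h2 h1.
  move=> h; move: hc h; set z := cc t; clear; move=> hc h; lra.
have z0 : forall y : 'rV[R]_d, dotv 0 y = 0.
  by move=> y; rewrite /dotv big1 // => i _; rewrite mxE mul0r.
case: (pickP (fun p : F * F => 0 < NN p.1 p.2)) => [[g1 g2] /= hg|hn].
  exists (rr (A g1 g2)) => f1 f2.
  have [hp|] := boolP (0 < NN f1 f2).
    rewrite (Heq g1 g2 f1 f2 hg hp) /rr /=; rewrite -/(NN f1 f2) mulfVK ?gt_eqF //.
  rewrite lt_def NN_ge0 andbT negbK => /eqP/NN0 ->.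
  by rewrite !subrr /enorm !z0 sqrtr0 expr0n mulr0.
exists 0 => f1 f2.
have := hn (f1, f2); rewrite /= lt_def NN_ge0 andbT => /negbFE/eqP/NN0 ->.
by rewrite !subrr z0 mul0r.
Qed.
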